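(* For every integer $d>1$ there exist a rational function $r$ of degree $d$ and $2d-2$ distinct points $c_1,\dots,c_{2d-2}\in\mathbb C$ such that $r'(c_j)=0$ and $r(c_j)=\overline{c_j}$ for all $j$. *)

(* Defs.v *)
From mathcomp Require Import all_boot all_order all_algebra.
From mathcomp Require Import reals.
From mathcomp.real_closed Require Import complex.
Set Implicit Arguments. Unset Strict Implicit. Unset Printing Implicit Defensive.
Import Order.TTheory GRing.Theory Num.Theory.
Local Open Scope ring_scope.

(* A rational function r is represented by a pair (p, q) of polynomials,
   r = p / q, in lowest terms (coprime) with q <> 0.  Its degree is
   max(deg p, deg q). *)
Definition rat_fun_deg (C : fieldType) (p q : {poly C}) (d : nat) : Prop :=
  [/\ q != 0, coprimep p q & (maxn (size p) (size q)).-1 = d].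

(* value of r = p/q at a point c (meaningful when q.[c] != 0) *)
Definition rat_eval (C : fieldType) (p q : {poly C}) (c : C) : C := p.[c] / q.[c].

Definition rat_deriv_eval (C : fieldType) (p q : {poly C}) (c : C) : C :=
  (p^`() * q - p * q^`()).[c] / (q ^+ 2).[c].

(* Main.v *)
Require Import Defs.
From mathcomp Require Import all_boot all_order all_algebra all_field all_solvable.
From mathcomp Require Import reals.
From mathcomp.real_closed Require Import complex polyrcf.
From mathcomp Require Import ring lra.
Import Order.TTheory GRing.Theory Num.Theory.
Local Open Scope ring_scope.
Local Open Scope complex_scope.

Section G.
Variables (F : fieldType) (n : nat) (a b : F).
Hypothesis n0 : (0 < n)%N.
Definition pG : {poly F} := a *: 'X^n + b%:P.
Definition qG : {poly F} := b *: 'X^(n.+1) + a *: 'X.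
Definition DG u := n%:R * a * u * (b * u + a) - (a * u + b) * (n.+1%:R * b * u + a).

Lemma evalp c : pG.[c] = a * c ^+ n + b.
Proof. by rewrite /pG hornerD hornerZ hornerXn hornerC. Qed.
Lemma evalq c : qG.[c] = c * (b * c ^+ n + a).
Proof. rewrite /qG hornerD !hornerZ hornerXn hornerX exprSr; ring. Qed.
Lemma evald c : (pG^`() * qG - pG * qG^`()).[c] = DG (c ^+ n).
Proof.
have e : c ^+ n = c ^+ n.-1 * c by rewrite -exprSr prednK.
rewrite /pG /qG /DG !derivD !derivZ !derivXn derivC derivX hornerD hornerN !hornerM.
rewrite !hornerD !hornerZ !hornerMn !hornerXn hornerC hornerX hornerC /= e exprSr e.
have h1 : (1 : {poly F}).[c] = 1 by rewrite -polyC1 hornerC.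
rewrite h1; ring.
Qed.
End G.
Arguments pG {F}. Arguments qG {F}. Arguments DG {F}.
Arguments evalp {F}. Arguments evalq {F}. Arguments evald {F}.

Lemma exists_sigma (R : rcfType) (m : nat) :
  exists s : R, [/\ 0 < s, s < 1 &
    s ^+ 2 * (1 - s ^+ 2 ^+ m.+3) = m.+3%:R * s ^+ m.+3 * (1 - s ^+ 4)].
Proof.
pose n := m.+3.
pose K : {poly R} := \sum_(k < n) ('X ^+ 2) ^+ k - n%:R *: ('X ^+ m.+1 + 'X ^+ n).
have hK x : K.[x] = \sum_(k < n) (x ^+ 2) ^+ k - n%:R * (x ^+ m.+1 + x ^+ n).
  by rewrite /K !hornerE horner_sum; congr (_ - _); apply: eq_bigr => k _; rewrite !hornerE.
have K0 : K.[0] = 1.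
  rewrite hK big_ord_recl big1 => [|k _]; last by rewrite expr0n /= expr0n.
  by rewrite !expr0n /=; ring.
have K1 : K.[1] = - n%:R.
  rewrite hK (eq_bigr (fun _ => 1)) => [|k _]; last by rewrite !expr1n.
  rewrite sumr_const card_ord !expr1n; ring.
have [s /andP[s0 s1] rs] : {x : R | x \in `]0, 1[ & root K x}.
  apply: poly_ivtoo => //; rewrite K0 K1 mul1r oppr_lt0 ltr0n //.
exists s; split => //.
move/eqP: rs; rewrite hK => /eqP; rewrite subr_eq0 => /eqP E.
have G := subrX1 (s ^+ 2) n.
have -> : 1 - s ^+ 2 ^+ n = (1 - s ^+ 2) * \sum_(i < n) (s ^+ 2) ^+ i.
  by rewrite -opprB G -mulNr opprB.
rewrite E /n !exprS; ring.
Qed.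

Lemma prim_root_ex (R : rcfType) n : (n > 0)%N -> exists z : R[i], n.-primitive_root z.
Proof.
pose p : {poly R[i]} := 'X^n - 1; have [r Dp] := closed_field_poly_normal p.
move=> n_gt0; rewrite (monicP _) ?monicXnsubC // scale1r in Dp.
have rn1: all n.-unity_root r by apply/allP=> z; rewrite -root_prod_XsubC -Dp.
have sz_r: (n < (size r).+1)%N.
  by rewrite -(size_prod_XsubC r id) -Dp size_XnsubC.
have [|z] := hasP (has_prim_root n_gt0 rn1 _ sz_r); last by exists z.
by rewrite -separable_prod_XsubC -Dp separable_Xn_sub_1 // pnatr_eq0 -lt0n.
Qed.

Lemma conjcM (R : rcfType) (x y : R[i]) : (x * y)^*%C = x^*%C * y^*%C.
Proof. exact: rmorphM. Qed.
Lemma conjcX (R : rcfType) (x : R[i]) k : (x ^+ k)^*%C = x^*%C ^+ k.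
Proof. exact: rmorphXn. Qed.

Lemma nzC (R : rcfType) (x : R) : x != 0 -> x%:C != 0 :> R[i].
Proof. by rewrite fmorph_eq0. Qed.
Arguments nzC {R x}.

Lemma general (R : realType) (m : nat) :
  exists (p q : {poly R[i]}) (c : 'I_(m.+4.*2 - 2) -> R[i]),
    [/\ rat_fun_deg p q m.+4,
        injective c &
        forall j : 'I_(m.+4.*2 - 2),
          [/\ q.[c j] != 0,
              rat_deriv_eval p q (c j) = 0 &
              rat_eval p q (c j) = conjc (c j)]].
Proof.
pose n := m.+3.
have n0 : (0 < n)%N by [].
have [sr [sr0 sr1 Er]] := exists_sigma R m.
have [z hz] := @prim_root_ex R n n0.
pose wr := sr ^+ n.
have wr0 : 0 < wr by rewrite exprn_gt0.
have wr1 : wr < 1 by rewrite /wr exprn_ilt1 // ltW.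
have t1 : sr ^+ m.+1 < 1 by rewrite exprn_ilt1 // ltW.
have t0 : 0 < sr ^+ m.+1 by rewrite exprn_gt0.
have wrs : wr = sr ^+ 2 * sr ^+ m.+1 by rewrite -exprD.
have s21 : sr ^+ 2 < 1 by rewrite exprn_ilt1 // ltW.
have s20 : 0 < sr ^+ 2 by rewrite exprn_gt0.
have ar0 : 1 - sr ^+ 2 * wr != 0 by rewrite subr_eq0 eq_sym lt_eqF //; nra.
have br0 : sr ^+ 2 - wr != 0 by rewrite subr_eq0 gt_eqF // wrs; nra.
have w20 : 1 - wr ^+ 2 != 0 by rewrite subr_eq0 eq_sym lt_eqF //; nra.
have s40 : 1 - sr ^+ 2 ^+ 2 != 0 by rewrite subr_eq0 eq_sym lt_eqF //; nra.
pose s : R[i] := sr%:C.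
pose W : R[i] := s ^+ n.
pose s2 : R[i] := s ^+ 2.
pose a : R[i] := 1 - s2 * W.
pose b : R[i] := s2 - W.
have s0 : s != 0 by apply: nzC; rewrite gt_eqF.
have W0 : W != 0 by rewrite expf_neq0.
have a0 : a != 0.
  by move: (nzC ar0); rewrite rmorphB rmorphM !rmorphXn rmorph1.
have b0 : b != 0.
  by move: (nzC br0); rewrite rmorphB !rmorphXn.
have hW2 : 1 - W ^+ 2 != 0.
  by move: (nzC w20); rewrite rmorphB !rmorphXn rmorph1.
have hs4 : 1 - s2 ^+ 2 != 0.
  by move: (nzC s40); rewrite rmorphB !rmorphXn rmorph1.
have E : s2 * (1 - W ^+ 2) = n%:R * W * (1 - s2 ^+ 2).
  have Er' : sr ^+ 2 * (1 - wr ^+ 2) = n%:R * wr * (1 - (sr ^+ 2) ^+ 2).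
    have e1 : wr ^+ 2 = (sr ^+ 2) ^+ n by rewrite -!exprM mulnC.
    have e2 : (sr ^+ 2) ^+ 2 = sr ^+ 4 by rewrite -exprM.
    by rewrite e1 e2 Er.
  have hs2 : s2 = (sr ^+ 2)%:C by rewrite /s2 /s rmorphXn.
  have hW : W = wr%:C by rewrite /W /s /wr rmorphXn.
  rewrite hs2 hW; move: Er'; move: (sr ^+ 2) (wr) => x y h.
  have := congr1 (real_complex R) h.
  by rewrite !rmorphM !rmorphB !rmorphXn rmorph1 rmorph_nat.
have zn : z ^+ n = 1 := prim_expr_order hz.
have zz : z * z^*%C = 1.
  have nz : `|z| = 1.
    apply/eqP; rewrite -(@pexpr_eq1 _ _ n) // -normrX zn normr1 //.
  by rewrite -sqr_normc nz expr1n.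
have DW : DG n a b W = 0.
  have -> : DG n a b W = (1 - W ^+ 2) * (n%:R * W * (1 - s2 ^+ 2) - s2 * (1 - W ^+ 2)).
    rewrite /DG /a /b; ring.
  by rewrite E subrr mulr0.
have DV : DG n a b W^-1 = 0.
  have -> : DG n a b W^-1 = W ^- 2 * DG n a b W by rewrite /DG; field.
  by rewrite DW mulr0.
pose p := pG n a b.
pose q := qG n a b.
have key : forall c U, c ^+ n = U -> (U = W \/ U = W^-1) -> c != 0 ->
    c^*%C * q.[c] = p.[c] ->
    [/\ q.[c] != 0, rat_deriv_eval p q c = 0 & rat_eval p q c = c^*%C].
  move=> c U cU hU c0 hv.
  have q0 : q.[c] != 0.
    rewrite /q evalq cU mulf_neq0 //; case: hU => ->.
      by have -> : b * W + a = 1 - W ^+ 2 by rewrite /a /b; ring.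
    have -> : b * W^-1 + a = W^-1 * s2 * (1 - W ^+ 2) by rewrite /a /b; field.
    by rewrite !mulf_neq0 ?invr_eq0 // expf_neq0.
  split => //.
    by rewrite /rat_deriv_eval evald // cU; case: hU => ->; rewrite ?DW ?DV mul0r.
  by rewrite /rat_eval -hv mulfK.
have zj0 : forall j, z ^+ j != 0.
  by move=> j; rewrite expf_neq0 // (prim_root_eq0 hz).
have zjn : forall j, (z ^+ j) ^+ n = 1 by move=> j; rewrite -exprM mulnC exprM zn expr1n.
have zjc : forall j, z ^+ j * (z ^+ j)^*%C = 1.
  by move=> j; rewrite conjcX -exprMn zz expr1n.
have sc : s^*%C = s by rewrite /s conjc_real.
have cn1 : forall j, (s * z ^+ j) ^+ n = W by move=> j; rewrite exprMn zjn mulr1.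
have cn2 : forall j, (s^-1 * z ^+ j) ^+ n = W^-1.
  by move=> j; rewrite exprMn zjn mulr1 exprVn.
pose c := fun j : 'I_(m.+4.*2 - 2) =>
  if (j < n)%N then s * z ^+ j else s^-1 * z ^+ (j - n).
have WV : W != W^-1.
  apply/negP => /eqP hw; move/eqP: hW2; apply.
  by rewrite expr2 {2}hw divff // subrr.
exists p, q, c; split.
- have sp : size p = n.+1.
    rewrite /p /pG size_polyDl size_scale // size_polyXn //.
    by apply: leq_ltn_trans (size_polyC_leq1 _) _.
  have sq : size q = n.+2.
    rewrite /q /qG size_polyDl size_scale //; first exact: size_polyXn.
    by rewrite size_polyX size_scale // size_polyXn.
  split.
  + by rewrite -size_poly_eq0 sq.
  + apply: Pdiv.ClosedField.root_coprimep => x; rewrite /root /p evalp => /eqP rx.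
    rewrite /q evalq; apply: mulf_neq0.
      apply/negP => /eqP x0; move: rx; rewrite x0 expr0n /= mulr0 add0r.
      by move/eqP; rewrite (negPf b0).
    apply/negP => /eqP hx.
    have : b * (a * x ^+ n + b) - a * (b * x ^+ n + a) = 0 by rewrite rx hx !mulr0 subrr.
    have -> : b * (a * x ^+ n + b) - a * (b * x ^+ n + a) =
              - ((1 - s2 ^+ 2) * (1 - W ^+ 2)) by rewrite /a /b; ring.
    by move/eqP; rewrite oppr_eq0 mulf_eq0 (negPf hs4) (negPf hW2).
  + by rewrite sp sq maxnSS maxnSS /maxn leqnn.
- move=> i j; rewrite /c.
  case: (ltnP i n) => hi; case: (ltnP j n) => hj => hc.
  + apply: val_inj => /=; move/(mulfI s0)/eqP: hc; rewrite (eq_prim_root_expr hz).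
    by rewrite !modn_small // => /eqP.
  + by move: (congr1 (fun x => x ^+ n) hc); rewrite cn1 cn2 => /eqP; rewrite (negPf WV).
  + by move: (congr1 (fun x => x ^+ n) hc); rewrite cn1 cn2 => /esym/eqP; rewrite (negPf WV).
  + apply: val_inj => /=; move/(mulfI (invr_neq0 s0))/eqP: hc; rewrite (eq_prim_root_expr hz).
    have ltn_i : (i < n.*2)%N by exact: ltn_ord i.
    have ltn_j : (j < n.*2)%N by exact: ltn_ord j.
    rewrite !modn_small; last 2 first.
    * by rewrite ltn_subLR // addnn.
    * by rewrite ltn_subLR // addnn.
    by move=> /eqP h; rewrite -(subnK hi) -(subnK hj) h.
- move=> j; rewrite /c; case: (ltnP j n) => hj.
  + apply: (key _ W); rewrite ?cn1 ?mulf_neq0 //; first by left.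
    rewrite /p /q evalp evalq cn1 conjcM sc.
    have -> : s * (z ^+ j)^*%C * (s * z ^+ j * (b * W + a)) =
              s2 * (z ^+ j * (z ^+ j)^*%C) * (b * W + a) by rewrite /s2; ring.
    by rewrite zjc mulr1 /a /b /s2; ring.
  + apply: (key _ W^-1); rewrite ?cn2 ?mulf_neq0 ?invr_neq0 //; first by right.
    rewrite /p /q evalp evalq cn2 conjcM conjc_inv sc.
    have -> : s^-1 * (z ^+ (j - n))^*%C * (s^-1 * z ^+ (j - n) * (b * W^-1 + a)) =
              s^-1 ^+ 2 * (z ^+ (j - n) * (z ^+ (j - n))^*%C) * (b * W^-1 + a) by ring.
    rewrite zjc mulr1 /a /b /s2; field.
    by rewrite s0 W0.
Qed.



Lemma point_ok (K : fieldType) (p q : {poly K}) x v : q.[x] != 0 ->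
  (p^`() * q - p * q^`()).[x] = 0 -> p.[x] = v * q.[x] ->
  [/\ q.[x] != 0, rat_deriv_eval p q x = 0 & rat_eval p q x = v].
Proof.
move=> q0 hd hv; split => //; first by rewrite /rat_deriv_eval hd mul0r.
by rewrite /rat_eval hv mulfK.
Qed.

Lemma case2 (R : realType) :
  exists (p q : {poly R[i]}) (c : 'I_(2.*2 - 2) -> R[i]),
    [/\ rat_fun_deg p q 2,
        injective c &
        forall j : 'I_(2.*2 - 2),
          [/\ q.[c j] != 0,
              rat_deriv_eval p q (c j) = 0 &
              rat_eval p q (c j) = conjc (c j)]].
Proof.
pose p : {poly R[i]} := 'X^2.
pose q : {poly R[i]} := 2%:R *: ('X - (2%:R^-1)%:P).
have h2 : (2%:R : R[i]) != 0 by rewrite pnatr_eq0.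
have ep x : p.[x] = x ^+ 2 by rewrite /p hornerXn.
have eq x : q.[x] = 2%:R * x - 1.
  by rewrite /q hornerZ hornerXsubC mulrBr divff.
have ed x : (p^`() * q - p * q^`()).[x] = 2%:R * x * (x - 1).
  by rewrite /p /q !derivE !hornerE /=; field.
exists p; exists q; exists (fun j : 'I_(2.*2 - 2) => (nat_of_ord j)%:R : R[i]). split.
- split.
  + by rewrite -size_poly_eq0 /q size_scale // size_XsubC.
  + apply: Pdiv.ClosedField.root_coprimep => x; rewrite /root ep expf_eq0 /= => /eqP ->.
    by rewrite eq mulr0 sub0r oppr_eq0 oner_eq0.
  + by rewrite /p /q size_polyXn size_scale // size_XsubC.
- move=> i j /eqP; rewrite eqr_nat => /eqP h; exact: val_inj.
- move=> j; apply: point_ok.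
  + rewrite eq; case: j => [[|[|k]] hk] //=; rewrite ?mulr0 ?sub0r ?oppr_eq0 ?oner_eq0 //.
    by rewrite mulr1 -[2]/(1 + 1)%:R natrD addrK oner_eq0.
  + rewrite ed; case: j => [[|[|k]] hk] //=; by rewrite ?mulr0 ?mul0r ?subrr ?mulr0.
  + rewrite ep eq conjc_nat; case: j => [[|[|k]] hk] //=.
    * by rewrite expr0n mul0r.
    * by rewrite mulr1 expr1n -[2]/(1 + 1)%:R natrD addrK mul1r.
Qed.


Lemma conj_i (R : rcfType) : ('i : R[i])^*%C = - 'i.
Proof. by apply/eqP; rewrite eq_complex /= oppr0 !eqxx. Qed.

Lemma case3 (R : realType) :
  exists (p q : {poly R[i]}) (c : 'I_(3.*2 - 2) -> R[i]),
    [/\ rat_fun_deg p q 3,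
        injective c &
        forall j : 'I_(3.*2 - 2),
          [/\ q.[c j] != 0,
              rat_deriv_eval p q (c j) = 0 &
              rat_eval p q (c j) = conjc (c j)]].
Proof.
pose sr : R := Num.sqrt 3.
have sr0 : 0 < sr by rewrite sqrtr_gt0 ltr0n.
have sr2 : sr ^+ 2 = 3 by rewrite sqr_sqrtr // ler0n.
pose Cr := 2 + sr.
have Cr0 : 0 < Cr by rewrite /Cr; lra.
pose S : R[i] := sr%:C.
pose C : R[i] := Cr%:C.
have S2 : S ^+ 2 = 3 by rewrite /S -rmorphXn sr2 rmorph_nat.
have CS : C = 2 + S by rewrite /C /Cr rmorphD rmorph_nat.
have S0 : S != 0 by rewrite fmorph_eq0 gt_eqF.
have Sp : 0 < S by rewrite ltcR.
pose p : {poly R[i]} := (- S) *: 'X^3 + (3 * (2 + S)) *: 'X.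
pose q : {poly R[i]} := 3 *: 'X^2 + (3 + 2 * S)%:P.
have ep x : p.[x] = x * (- S * x ^+ 2 + 3 * (2 + S)).
  rewrite /p hornerD !hornerZ hornerXn (hornerX x); ring.
have eq x : q.[x] = 3 * x ^+ 2 + 3 + 2 * S.
  by rewrite /q hornerD hornerZ hornerXn hornerC; ring.
have ed x : (p^`() * q - p * q^`()).[x] =
    (- 3 * S * x ^+ 2 + 6 + 3 * S) * (3 * x ^+ 2 + 3 + 2 * S)
    - 6 * x ^+ 2 * (- S * x ^+ 2 + 6 + 3 * S).
  have h1 : (1 : {poly R[i]}).[x] = 1 by rewrite -polyC1 hornerC.
  rewrite /p /q !derivD !derivZ !derivXn derivX derivC hornerD hornerN !hornerM.
  rewrite !hornerD !hornerZ !hornerMn !hornerXn (hornerC _ x) horner0 /=.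
  rewrite (hornerC (3 + 2 * S) x); ring.
have posC : forall a : R, 0 < a -> a%:C != 0 :> R[i] by move=> a a0; rewrite fmorph_eq0 gt_eqF.
have cN : forall y : R[i], (- y)^*%C = - y^*%C by move=> y; exact: rmorphN.
have cM : forall y z : R[i], (y * z)^*%C = y^*%C * z^*%C by move=> y z; exact: rmorphM.
have cC : C^*%C = C by rewrite /C conjc_real.
have x2 : ('i * C) ^+ 2 = - C ^+ 2 by rewrite exprMn sqr_i mulN1r.
have x2' : (- ('i * C)) ^+ 2 = - C ^+ 2 by rewrite sqrrN x2.
have q1 : 3 * 1 ^+ 2 + 3 + 2 * S != 0.
  have -> : 3 * 1 ^+ 2 + 3 + 2 * S = (6 + 2 * sr)%:C.
    by rewrite rmorphD rmorphM !rmorph_nat; ring.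
  by apply: posC; lra.
have qi : 3 * (- C ^+ 2) + 3 + 2 * S != 0.
  have -> : 3 * (- C ^+ 2) + 3 + 2 * S = - (9 + 10 * sr + 3 * sr * sr)%:C.
    by rewrite CS !rmorphD !rmorphM !rmorph_nat; ring.
  by rewrite oppr_eq0; apply: posC; nra.
pose c := fun j : 'I_(3.*2 - 2) => nth 0 [:: 1; -1; 'i * C; - ('i * C)] j.
have e2 : (-1 : R[i]) = Complex (-1) 0 by apply/eqP; rewrite eq_complex /= oppr0 !eqxx.
have e3 : 'i * C = Complex 0 Cr.
  by apply/eqP; rewrite eq_complex /= !mul0r !mulr0 !mul1r subr0 add0r !eqxx.
have e4 : - ('i * C) = Complex 0 (- Cr).
  by rewrite e3; apply/eqP; rewrite eq_complex /= oppr0 !eqxx.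
have e1 : (1 : R[i]) = Complex 1 0 by [].
have sX3 : size ((- S) *: ('X^3 : {poly R[i]})) = 4%N.
  by rewrite size_scale ?oppr_eq0 // size_polyXn.
have sX1 : (size ((3 * (2 + S)) *: ('X : {poly R[i]})) <= 2)%N.
  by apply: leq_trans (size_scale_leq _ _) _; rewrite size_polyX.
have sp : size p = 4%N by rewrite /p size_polyDl sX3 // (leq_ltn_trans sX1).
have sX2 : size ((3 : R[i]) *: ('X^2 : {poly R[i]})) = 3%N.
  by rewrite size_scale ?pnatr_eq0 // size_polyXn.
have sq : size q = 3%N.
  by rewrite /q size_polyDl sX2 // (leq_ltn_trans (size_polyC_leq1 _)).
exists p, q, c; split.
- split.
  + by rewrite -size_poly_eq0 sq.
  + apply: Pdiv.ClosedField.root_coprimep => x; rewrite /root ep eq mulf_eq0.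
    case/orP => [/eqP -> | /eqP hx].
      have -> : 3 * 0 ^+ 2 + 3 + 2 * S = (3 + 2 * sr)%:C.
        by rewrite rmorphD rmorphM !rmorph_nat; ring.
      by apply: posC; lra.
    apply/negP => /eqP hq.
    have : S * (3 * x ^+ 2 + 3 + 2 * S) = 0 by rewrite hq mulr0.
    have -> : S * (3 * x ^+ 2 + 3 + 2 * S) =
        -3 * (- S * x ^+ 2 + 3 * (2 + S)) + (18 + 12 * sr + 2 * sr * sr)%:C.
      by rewrite !rmorphD !rmorphM !rmorph_nat; ring.
    by rewrite hx mulr0 add0r; apply/eqP; apply: posC; nra.
  + by rewrite sp sq.
- move=> [[|[|[|[|i]]]] hi] [[|[|[|[|j]]]] hj] //; rewrite /c /= ?e4 ?e3 ?e2 ?e1 => h;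
    try (by apply: val_inj); exfalso; case: h => *; lra.
- move=> [[|[|[|[|j]]]] hj] //.
  + have -> : c (Ordinal hj) = 1 by [].
    apply: point_ok; first by rewrite eq.
      by rewrite ed; ring.
    by rewrite ep eq conjc1; ring.
  + have -> : c (Ordinal hj) = -1 by [].
    apply: point_ok; first by rewrite eq sqrrN.
      by rewrite ed; ring.
    by rewrite ep eq cN conjc1; ring.
  + have -> : c (Ordinal hj) = 'i * C by [].
    apply: point_ok; first by rewrite eq x2.
      rewrite ed x2 CS.
      transitivity ((S ^+ 2 - 3) * (-3 * S ^+ 3 - 18 * S ^+ 2 - 39 * S - 30)); first by ring.
      by rewrite S2 subrr mul0r.
    rewrite ep eq x2 cM conj_i cC.
    apply/eqP; rewrite -subr_eq0; apply/eqP; rewrite CS.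
    transitivity ('i * (2 + S) * ((S ^+ 2 - 3) * (S + 1))); first by ring.
    by rewrite S2 subrr mul0r mulr0.
  + have -> : c (Ordinal hj) = - ('i * C) by [].
    apply: point_ok; first by rewrite eq x2'.
      rewrite ed x2' CS.
      transitivity ((S ^+ 2 - 3) * (-3 * S ^+ 3 - 18 * S ^+ 2 - 39 * S - 30)); first by ring.
      by rewrite S2 subrr mul0r.
    rewrite ep eq x2' cN cM conj_i cC.
    apply/eqP; rewrite -subr_eq0; apply/eqP; rewrite CS.
    transitivity (- 'i * (2 + S) * ((S ^+ 2 - 3) * (S + 1))); first by ring.
    by rewrite S2 subrr mul0r mulr0.
Qed.

Local Close Scope complex_scope.

Theorem theorem6p6 (R : realType) (d : nat) (hd : (1 < d)%N) :
  exists (p q : {poly R[i]}) (c : 'I_(d.*2 - 2) -> R[i]),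
    [/\ rat_fun_deg p q d,
        injective c &
        forall j : 'I_(d.*2 - 2),
          [/\ q.[c j] != 0,
              rat_deriv_eval p q (c j) = 0 &
              rat_eval p q (c j) = conjc (c j)]].
Proof.
case: d hd => [|[|[|[|m]]]] // _.
- exact: case2.
- exact: case3.
- exact: general.
Qed.
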